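(* Let $X$ be a hyperbolic approximation of $Z$ with parameter $r$, let $v,v'\in V$ be horizontally distinct, and let $l$ be their critical level. Then $|vv'|\le\ell(v)+\ell(v')-2l+3$.
   Context: Hyperbolic approximation: let $(Z,d)$ be a bounded metric space with at least two points and fix $0<r\le1/6$. Let $k_0$ be the largest integer with $\operatorname{diam}Z<r^{k_0}$. For each integer $k\ge k_0$ choose a maximal $r^k$-separated subset $V_k\subset Z$. Vertex set $V=\bigsqcup_{k\ge k_0}V_k$ (disjoint union), level $\ell(v)=k$ for $v\in V_k$, ball $B(v)=\{z:d(z,v)<2r^k\}$ with closure $\overline B(v)$. Edges: equal-level $v,v'$ with $\overline B(v)\cap\overline B(v')\ne\emptyset$, or vertices on adjacent levels whose higher-level ball is contained in the lower-level ball. Path metric with unit edges, $|vv'|$; $d$ is the metric of $Z$. Vertices $v,v'$ are horizontally distinct if $\ell(v),\ell(v')\ge0$ and $d(v,v')\ge r^{\min\{\ell(v),\ell(v')\}}$; in that case their critical level is the integer $l$ with $r^l\le d(v,v')<r^{l-1}$. *)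

(* Defs.v *)
From Stdlib Require Import Reals ZArith.
Open Scope R_scope.

Definition is_metric {T : Type} (d : T -> T -> R) : Prop :=
  (forall x y, 0 <= d x y) /\
  (forall x y, d x y = 0 <-> x = y) /\
  (forall x y, d x y = d y x) /\
  (forall x y z, d x z <= d x y + d y z).

Definition bounded_metric {T : Type} (d : T -> T -> R) : Prop :=
  exists M, forall x y, d x y <= M.

Definition is_diam {T : Type} (d : T -> T -> R) (D : R) : Prop :=
  is_lub (fun t => exists x y, t = d x y) D.

Definition separated {T : Type} (d : T -> T -> R) (eps : R) (S : T -> Prop) : Prop :=
  forall x y, S x -> S y -> x <> y -> eps <= d x y.

Definition maximal_separated {T : Type} (d : T -> T -> R) (eps : R) (S : T -> Prop) : Prop :=
  separated d eps S /\
  forall S' : T -> Prop, separated d eps S' -> (forall x, S x -> S' x) ->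
    forall x, S' x -> S x.

(* Vertices of the disjoint union: a level together with a point. *)
Record vertex (T : Type) := mkVertex { lev : Z; pt : T }.
Arguments mkVertex {T}.
Arguments lev {T}.
Arguments pt {T}.

Section HypApprox.
Context {T : Type} (d : T -> T -> R) (r : R) (k0 : Z) (V : Z -> T -> Prop).

Definition inV (v : vertex T) : Prop := (k0 <= lev v)%Z /\ V (lev v) (pt v).

Definition ball (v : vertex T) (z : T) : Prop := d z (pt v) < 2 * powerRZ r (lev v).

Definition cl_ball (v : vertex T) (z : T) : Prop :=
  forall eps, 0 < eps -> exists w, ball v w /\ d z w < eps.

Definition edge (v w : vertex T) : Prop :=
  inV v /\ inV w /\ v <> w /\
  ( (lev v = lev w /\ exists z, cl_ball v z /\ cl_ball w z)
  \/ (lev w = (lev v + 1)%Z /\ forall z, ball w z -> ball v z)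
  \/ (lev v = (lev w + 1)%Z /\ forall z, ball v z -> ball w z) ).

Inductive walk : nat -> vertex T -> vertex T -> Prop :=
| walk0 : forall u, inV u -> walk 0 u u
| walkS : forall n u x w, edge u x -> walk n x w -> walk (S n) u w.

(* |v w| <= N for the path metric with unit edges *)
Definition gdist_le (v w : vertex T) (N : Z) : Prop :=
  exists n : nat, walk n v w /\ (Z.of_nat n <= N)%Z.

Definition horiz_distinct (v w : vertex T) : Prop :=
  (0 <= lev v)%Z /\ (0 <= lev w)%Z /\
  powerRZ r (Z.min (lev v) (lev w)) <= d (pt v) (pt w).

Definition critical_level (v w : vertex T) (l : Z) : Prop :=
  powerRZ r l <= d (pt v) (pt w) /\ d (pt v) (pt w) < powerRZ r (l - 1).

End HypApprox.

Definition is_hyp_approx {T : Type} (d : T -> T -> R) (r : R) (k0 : Z)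
    (V : Z -> T -> Prop) : Prop :=
  is_metric d /\ bounded_metric d /\ (exists x y : T, x <> y) /\
  0 < r /\ r <= 1/6 /\
  (exists D, is_diam d D /\ D < powerRZ r k0 /\
             forall k : Z, D < powerRZ r k -> (k <= k0)%Z) /\
  (forall k : Z, (k0 <= k)%Z -> maximal_separated d (powerRZ r k) (V k)).

(* Main.v *)
Require Import Defs.
From Stdlib Require Import Reals ZArith.
From Stdlib Require Import Lra Lia Classical.
Open Scope R_scope.

Lemma pow_strict (r : R) (a b : Z) : 0 < r -> r < 1 -> (b < a)%Z ->
  powerRZ r a < powerRZ r b.
Proof.
  intros H0 H1 Hab. rewrite !powerRZ_Rpower by lra. unfold Rpower.
  apply exp_increasing.
  assert (ln r < 0) by (rewrite <- ln_1; apply ln_increasing; lra).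
  apply IZR_lt in Hab. nra.
Qed.

Lemma pow_lt_inv (r : R) (a b : Z) : 0 < r -> r < 1 ->
  powerRZ r a < powerRZ r b -> (b < a)%Z.
Proof.
  intros H0 H1 H. destruct (Z_lt_le_dec b a) as [h|h]; auto.
  destruct (Z.eq_dec a b) as [->|hn]; [lra|].
  assert (powerRZ r b < powerRZ r a) by (apply pow_strict; auto; lia). lra.
Qed.

Lemma pow_succ (r : R) (j : Z) : 0 < r -> powerRZ r (j + 1) = r * powerRZ r j.
Proof. intros. rewrite powerRZ_add by lra. simpl. lra. Qed.

Section S.
Context {T : Type} (d : T -> T -> R) (r : R) (k0 : Z) (V : Z -> T -> Prop).

Lemma edge_sym v w : edge d r k0 V v w -> edge d r k0 V w v.
Proof.
  intros [h1 [h2 [h3 h4]]]. split; [auto|split; [auto|split]].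
  - intro e; apply h3; auto.
  - destruct h4 as [[e [z [a b]]]|[[e f]|[e f]]].
    + left; split; [auto| exists z; auto].
    + right; right; auto.
    + right; left; auto.
Qed.

Lemma walk_inV n u w : walk d r k0 V n u w -> inV k0 V u /\ inV k0 V w.
Proof.
  induction 1; auto. destruct H as [h1 [h2 _]]. tauto.
Qed.

Lemma walk_app n m u x w : walk d r k0 V n u x -> walk d r k0 V m x w ->
  walk d r k0 V (n + m) u w.
Proof.
  induction 1; intros; simpl; auto. eapply walkS; eauto.
Qed.

Lemma walk_rev n u w : walk d r k0 V n u w -> walk d r k0 V n w u.
Proof.
  induction 1. - constructor; auto.
  - replace (S n) with (n + 1)%nat by lia. eapply walk_app; eauto.
    eapply walkS. apply edge_sym; eauto. constructor.
    destruct H as [h1 _]; auto.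
Qed.

Hypothesis Hm : is_metric d.
Hypothesis Hr0 : 0 < r.
Hypothesis Hr1 : r <= 1/6.
Hypothesis HV : forall k : Z, (k0 <= k)%Z -> maximal_separated d (powerRZ r k) (V k).

Lemma cover k x : (k0 <= k)%Z -> exists c, V k c /\ d c x < powerRZ r k.
Proof.
  intros hk. destruct Hm as [hn [he [hs ht]]].
  destruct (classic (exists c, V k c /\ d c x < powerRZ r k)) as [h|h]; auto.
  exfalso. destruct (HV k hk) as [hsep hmax].
  assert (hx : V k x).
  { apply (hmax (fun y => V k y \/ y = x)); auto.
    intros a b ha hb hab. destruct ha as [ha| ->]; destruct hb as [hb| ->].
    - apply hsep; auto.
    - destruct (Rle_or_lt (powerRZ r k) (d a x)); auto. exfalso; apply h; eauto.
    - destruct (Rle_or_lt (powerRZ r k) (d b x)); [rewrite hs; auto|].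
      exfalso; apply h; eauto.
    - tauto. }
  apply h. exists x. split; auto. assert (d x x = 0) by (apply he; auto).
  pose proof (powerRZ_lt r k Hr0). lra.
Qed.

Lemma chain (l : Z) (x : T) : (k0 <= l)%Z -> V l x -> forall n : nat, forall j,
  (k0 <= j)%Z -> l = (j + Z.of_nat n)%Z ->
  exists c, V j c /\ d c x < powerRZ r j /\
    walk d r k0 V n (mkVertex j c) (mkVertex l x).
Proof.
  intros hl hx. destruct Hm as [hn [he [hs ht]]].
  induction n; intros j hj hjl.
  - simpl in hjl. rewrite Z.add_0_r in hjl. subst j.
    exists x. split; auto. split.
    + assert (d x x = 0) by (apply he; auto). pose proof (powerRZ_lt r l Hr0). lra.
    + constructor. split; auto.
  - destruct (IHn (j + 1)%Z) as [c' [hc' [hdc' hw]]]; [lia|lia|].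
    destruct (cover j x hj) as [c [hc hdc]].
    exists c. split; auto. split; auto.
    eapply walkS; [|exact hw].
    split; [split; simpl; auto|]. split; [split; simpl; auto; lia|].
    split. { intro e. injection e. lia. }
    right; left. split; [simpl; auto|].
    intros z hz. unfold ball in *; simpl in *.
    rewrite pow_succ in hz, hdc' by auto.
    pose proof (powerRZ_lt r j Hr0).
    pose proof (ht z c' c). pose proof (ht c' x c). pose proof (hs x c).
    nra.
Qed.
End S.

Theorem mainTheorem15 (T : Type) (d : T -> T -> R) (r : R) (k0 : Z)
    (V : Z -> T -> Prop) (v v' : vertex T) (l : Z) :
  is_hyp_approx d r k0 V ->
  inV k0 V v -> inV k0 V v' ->
  horiz_distinct d r v v' ->
  critical_level d r v v' l ->
  gdist_le d r k0 V v v' (lev v + lev v' - 2 * l + 3)%Z.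
Proof.
  intros [Hm [_ [_ [Hr0 [Hr1 [[D [HD [HDk _]]] HV]]]]]] [hv1 hv2] [hv'1 hv'2]
    [h0 [h0' hmin]] [hl1 hl2].
  pose proof Hm as [hn [he [hs ht]]].
  assert (hdD : d (pt v) (pt v') <= D).
  { destruct HD as [hub _]. apply hub. eauto. }
  assert (hk0l : (k0 < l)%Z) by (apply (pow_lt_inv r); lra).
  assert (hml : (l - 1 < Z.min (lev v) (lev v'))%Z) by (apply (pow_lt_inv r); lra).
  assert (h1 : (l - 1 < lev v)%Z) by lia.
  assert (h2 : (l - 1 < lev v')%Z) by lia.
  destruct (chain d r k0 V Hm Hr0 Hr1 HV (lev v) (pt v) hv1 hv2
     (Z.to_nat (lev v - (l - 1))) (l - 1)%Z ltac:(lia) ltac:(lia))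
     as [c [hc [hdc hw]]].
  destruct (chain d r k0 V Hm Hr0 Hr1 HV (lev v') (pt v') hv'1 hv'2
     (Z.to_nat (lev v' - (l - 1))) (l - 1)%Z ltac:(lia) ltac:(lia))
     as [c' [hc' [hdc' hw']]].
  apply walk_rev in hw.
  replace (mkVertex (lev v) (pt v)) with v in hw by (destruct v; auto).
  replace (mkVertex (lev v') (pt v')) with v' in hw' by (destruct v'; auto).
  destruct (classic (c = c')) as [ <- | hne].
  - exists (Z.to_nat (lev v - (l - 1)) + Z.to_nat (lev v' - (l - 1)))%nat.
    split. + eapply walk_app; eauto. + lia.
  - exists (Z.to_nat (lev v - (l - 1)) + S (Z.to_nat (lev v' - (l - 1))))%nat.
    split; [|lia].
    eapply walk_app; [exact hw|]. eapply walkS; [|exact hw'].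
    split; [split; simpl; auto; lia|]. split; [split; simpl; auto; lia|].
    split. { intro e; injection e; auto. }
    left. split; [reflexivity|]. exists (pt v).
    pose proof (powerRZ_lt r (l - 1) Hr0).
    split; intros eps heps; exists (pt v); split;
      try (assert (d (pt v) (pt v) = 0) by (apply he; auto); lra);
      unfold ball; simpl.
    + pose proof (hs (pt v) c). lra.
    + pose proof (ht (pt v) (pt v') c'). pose proof (hs (pt v') c'). lra.
Qed.
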